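(* Let $A$ be a sequence algebra. If a normed $A$-module $X$ is essential and homogeneous, then its completion $\overline X$ is also essential and homogeneous.
   Context: Modules are contractive ($\|a\cdot x\|\le\|a\|\|x\|$); the completion carries the continuously extended action. A sequence algebra is a normed algebra of complex sequences with coordinatewise operations containing $c_{00}$ as a dense subalgebra, with $\|\mathbf p^n\|=1$, where $\mathbf p^n$ has $1$ in place $n$ and $0$ elsewhere. For $x\in X$, $x_n:=\mathbf p^n\cdot x$. $X$ is essential if the closed linear span of $\{a\cdot x\}$ is $X$; homogeneous if $\|x_n\|\le\|y_n\|$ for all $n$ implies $\|x\|\le\|y\|$. *)

(* Defs.v *)
From Stdlib Require Import Reals.
Open Scope R_scope.

Record C : Type := mkC { Re : R; Im : R }.
Definition C0 : C := mkC 0 0.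
Definition C1 : C := mkC 1 0.
Definition Cplus (z w : C) : C := mkC (Re z + Re w) (Im z + Im w).
Definition Copp (z : C) : C := mkC (- Re z) (- Im z).
Definition Cmult (z w : C) : C :=
  mkC (Re z * Re w - Im z * Im w) (Re z * Im w + Im z * Re w).
Definition Cmod (z : C) : R := sqrt (Re z ^ 2 + Im z ^ 2).

Definition cseq := nat -> C.
Definition seq_zero : cseq := fun _ => C0.
Definition seq_add (a b : cseq) : cseq := fun n => Cplus (a n) (b n).
Definition seq_opp (a : cseq) : cseq := fun n => Copp (a n).
Definition seq_sub (a b : cseq) : cseq := seq_add a (seq_opp b).
Definition seq_mul (a b : cseq) : cseq := fun n => Cmult (a n) (b n).
Definition seq_scal (l : C) (a : cseq) : cseq := fun n => Cmult l (a n).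
Definition c00 (a : cseq) : Prop := exists N : nat, forall n, (N <= n)%nat -> a n = C0.
Definition unit_seq (n : nat) : cseq := fun m => if Nat.eqb m n then C1 else C0.

Record SeqAlgebra : Type := {
  sa_mem : cseq -> Prop;
  sa_norm : cseq -> R;
  sa_mem_zero : sa_mem seq_zero;
  sa_mem_add : forall a b, sa_mem a -> sa_mem b -> sa_mem (seq_add a b);
  sa_mem_scal : forall l a, sa_mem a -> sa_mem (seq_scal l a);
  sa_mem_mul : forall a b, sa_mem a -> sa_mem b -> sa_mem (seq_mul a b);
  sa_c00 : forall a, c00 a -> sa_mem a;
  sa_norm_nonneg : forall a, sa_mem a -> 0 <= sa_norm a;
  sa_norm_eq0 : forall a, sa_mem a -> sa_norm a = 0 -> a = seq_zero;
  sa_norm_triangle : forall a b, sa_mem a -> sa_mem b ->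
      sa_norm (seq_add a b) <= sa_norm a + sa_norm b;
  sa_norm_scal : forall l a, sa_mem a -> sa_norm (seq_scal l a) = Cmod l * sa_norm a;
  sa_norm_mul : forall a b, sa_mem a -> sa_mem b ->
      sa_norm (seq_mul a b) <= sa_norm a * sa_norm b;
  sa_c00_dense : forall a, sa_mem a -> forall eps, 0 < eps ->
      exists b, c00 b /\ sa_norm (seq_sub a b) < eps;
  sa_norm_unit : forall n, sa_norm (unit_seq n) = 1
}.

Record NormedModule (A : SeqAlgebra) : Type := {
  nm_car :> Type;
  nm_zero : nm_car;
  nm_add : nm_car -> nm_car -> nm_car;
  nm_opp : nm_car -> nm_car;
  nm_scal : C -> nm_car -> nm_car;
  nm_norm : nm_car -> R;
  nm_act : cseq -> nm_car -> nm_car;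
  nm_addA : forall x y z, nm_add x (nm_add y z) = nm_add (nm_add x y) z;
  nm_addC : forall x y, nm_add x y = nm_add y x;
  nm_add0 : forall x, nm_add x nm_zero = x;
  nm_addN : forall x, nm_add x (nm_opp x) = nm_zero;
  nm_scal1 : forall x, nm_scal C1 x = x;
  nm_scalA : forall l m x, nm_scal l (nm_scal m x) = nm_scal (Cmult l m) x;
  nm_scalDr : forall l x y, nm_scal l (nm_add x y) = nm_add (nm_scal l x) (nm_scal l y);
  nm_scalDl : forall l m x, nm_scal (Cplus l m) x = nm_add (nm_scal l x) (nm_scal m x);
  nm_norm_nonneg : forall x, 0 <= nm_norm x;
  nm_norm_eq0 : forall x, nm_norm x = 0 -> x = nm_zero;
  nm_norm_triangle : forall x y, nm_norm (nm_add x y) <= nm_norm x + nm_norm y;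
  nm_norm_scal : forall l x, nm_norm (nm_scal l x) = Cmod l * nm_norm x;
  nm_act_addr : forall a x y, sa_mem A a ->
      nm_act a (nm_add x y) = nm_add (nm_act a x) (nm_act a y);
  nm_act_addl : forall a b x, sa_mem A a -> sa_mem A b ->
      nm_act (seq_add a b) x = nm_add (nm_act a x) (nm_act b x);
  nm_act_scall : forall l a x, sa_mem A a ->
      nm_act (seq_scal l a) x = nm_scal l (nm_act a x);
  nm_act_scalr : forall l a x, sa_mem A a ->
      nm_act a (nm_scal l x) = nm_scal l (nm_act a x);
  nm_act_mul : forall a b x, sa_mem A a -> sa_mem A b ->
      nm_act (seq_mul a b) x = nm_act a (nm_act b x);
  nm_act_contr : forall a x, sa_mem A a ->
      nm_norm (nm_act a x) <= sa_norm A a * nm_norm x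
}.

Arguments nm_zero {A} n.
Arguments nm_add {A n}.
Arguments nm_opp {A n}.
Arguments nm_scal {A n}.
Arguments nm_norm {A n}.
Arguments nm_act {A n}.

Definition nm_dist {A : SeqAlgebra} {X : NormedModule A} (x y : X) : R :=
  nm_norm (nm_add x (nm_opp y)).

Definition coord {A : SeqAlgebra} {X : NormedModule A} (n : nat) (x : X) : X :=
  nm_act (unit_seq n) x.

Inductive in_act_span {A : SeqAlgebra} (X : NormedModule A) : X -> Prop :=
  | span_zero : in_act_span X (nm_zero X)
  | span_gen : forall a x, sa_mem A a -> in_act_span X (nm_act a x)
  | span_add : forall y z, in_act_span X y -> in_act_span X z ->
      in_act_span X (nm_add y z)
  | span_scal : forall l y, in_act_span X y -> in_act_span X (nm_scal l y).

(* essential: the closed linear span of {a . x} is X, i.e. the linear span is dense *)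
Definition essential {A : SeqAlgebra} (X : NormedModule A) : Prop :=
  forall x : X, forall eps, 0 < eps -> exists y, in_act_span X y /\ nm_dist x y < eps.

Definition homogeneous {A : SeqAlgebra} (X : NormedModule A) : Prop :=
  forall x y : X, (forall n, nm_norm (coord n x) <= nm_norm (coord n y)) ->
    nm_norm x <= nm_norm y.

Definition cauchy_seq {A : SeqAlgebra} {X : NormedModule A} (u : nat -> X) : Prop :=
  forall eps, 0 < eps -> exists N, forall m n, (N <= m)%nat -> (N <= n)%nat ->
    nm_dist (u m) (u n) < eps.
Definition converges_to {A : SeqAlgebra} {X : NormedModule A} (u : nat -> X) (l : X) : Prop :=
  forall eps, 0 < eps -> exists N, forall n, (N <= n)%nat -> nm_dist (u n) l < eps.
Definition complete {A : SeqAlgebra} (X : NormedModule A) : Prop :=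
  forall u : nat -> X, cauchy_seq u -> exists l, converges_to u l.

(* Such (Y, j) is unique up to isometric module isomorphism,
   and the action on Y is the continuous extension of the action on X. *)
Definition is_completion {A : SeqAlgebra} (X Y : NormedModule A) (j : X -> Y) : Prop :=
  complete Y /\
  (forall x y, j (nm_add x y) = nm_add (j x) (j y)) /\
  (forall l x, j (nm_scal l x) = nm_scal l (j x)) /\
  (forall x, nm_norm (j x) = nm_norm x) /\
  (forall a x, sa_mem A a -> j (nm_act a x) = nm_act a (j x)) /\
  (forall y : Y, forall eps, 0 < eps -> exists x : X, nm_dist y (j x) < eps).

(* Main.v *)
Require Import Defs.
From Stdlib Require Import Reals Lra Lia FunctionalExtensionality.
Require Import Defs.
Open Scope R_scope.

Lemma Ceq (z w : Defs.C) : Re z = Re w -> Im z = Im w -> z = w.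
Proof. destruct z, w; simpl; intros; subst; reflexivity. Qed.

Lemma Cmod_real (r : R) : Cmod (mkC r 0) = Rabs r.
Proof. unfold Cmod; simpl. rewrite <- sqrt_Rsqr_abs. f_equal. unfold Rsqr. ring. Qed.

Lemma Cmod_nonneg z : 0 <= Cmod z.
Proof. unfold Cmod. apply sqrt_pos. Qed.

Lemma Cmod_C1 : Cmod C1 = 1.
Proof. unfold C1. rewrite Cmod_real. apply Rabs_R1. Qed.

Lemma Cplus00 : Cplus C0 C0 = C0.
Proof. apply Ceq; simpl; ring. Qed.

Lemma seq_add00 : seq_add seq_zero seq_zero = seq_zero.
Proof. extensionality m. apply Cplus00. Qed.

Lemma unit_c00 n : c00 (unit_seq n).
Proof. exists (S n). intros m Hm. unfold unit_seq. destruct (Nat.eqb_spec m n); [lia|auto]. Qed.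

Definition Pm (M : nat) : cseq := fun m => if Nat.ltb m M then C1 else C0.

Lemma Pm_c00 M : c00 (Pm M).
Proof. exists M. intros m Hm. unfold Pm. destruct (Nat.ltb_spec m M); [lia|auto]. Qed.

Lemma Pm_S M : Pm (S M) = seq_add (Pm M) (unit_seq M).
Proof.
  extensionality m. unfold Pm, unit_seq, seq_add.
  destruct (Nat.ltb_spec m (S M)), (Nat.ltb_spec m M), (Nat.eqb_spec m M);
   try lia; apply Ceq; simpl; ring.
Qed.

Lemma mul_unit n b : seq_mul (unit_seq n) b = seq_scal (b n) (unit_seq n).
Proof.
  extensionality m. unfold seq_mul, seq_scal, unit_seq.
  destruct (Nat.eqb_spec m n); [subst|]; apply Ceq; simpl; ring.
Qed.

Lemma seq_sub_add a b : seq_add (seq_sub a b) b = a.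
Proof. extensionality m. unfold seq_add, seq_sub, seq_opp. apply Ceq; simpl; ring. Qed.

Lemma seq_opp_scal b : seq_opp b = seq_scal (mkC (-1) 0) b.
Proof. extensionality m. unfold seq_opp, seq_scal. apply Ceq; simpl; ring. Qed.

Lemma sa_sub (A : SeqAlgebra) a b : sa_mem A a -> sa_mem A b -> sa_mem A (seq_sub a b).
Proof. intros. unfold seq_sub. rewrite seq_opp_scal. apply sa_mem_add; auto. apply sa_mem_scal; auto. Qed.

Lemma Pm_mul_c00 M b N : (forall n, (N <= n)%nat -> b n = C0) -> (N <= M)%nat ->
  seq_mul (Pm M) b = b.
Proof.
  intros Hb HM. extensionality m. unfold seq_mul, Pm.
  destruct (Nat.ltb_spec m M).
  - apply Ceq; simpl; ring.
  - rewrite (Hb m) by lia. apply Ceq; simpl; ring.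
Qed.

Definition sub {A} {X : NormedModule A} (x y : X) : X := nm_add x (nm_opp y).

Lemma add0l {A} {X : NormedModule A} (x : X) : nm_add (nm_zero X) x = x.
Proof. rewrite nm_addC. apply nm_add0. Qed.

Lemma addNl {A} {X : NormedModule A} (x : X) : nm_add (nm_opp x) x = nm_zero X.
Proof. rewrite nm_addC. apply nm_addN. Qed.

Lemma add_cancel {A} {X : NormedModule A} (x y z : X) : nm_add x y = nm_add x z -> y = z.
Proof.
  intro H. rewrite <- (add0l y), <- (add0l z), <- (addNl x), <- !nm_addA, H. reflexivity.
Qed.

Lemma opp_uniq {A} {X : NormedModule A} (x y : X) : nm_add x y = nm_zero X -> y = nm_opp x.
Proof. intro H. apply (add_cancel x). rewrite H, nm_addN. reflexivity. Qed.

Lemma zero_uniq {A} {X : NormedModule A} (x : X) : nm_add x x = x -> x = nm_zero X.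
Proof. intro H. apply (add_cancel x). rewrite H, nm_add0. reflexivity. Qed.

Lemma subK {A} {X : NormedModule A} (x y : X) : nm_add (sub x y) y = x.
Proof. unfold sub. rewrite <- nm_addA, addNl, nm_add0. reflexivity. Qed.

Lemma addK {A} {X : NormedModule A} (x y : X) : sub (nm_add x y) y = x.
Proof. unfold sub. rewrite <- nm_addA, nm_addN, nm_add0. reflexivity. Qed.

Lemma sub_eq {A} {X : NormedModule A} (w u v : X) : u = nm_add w v -> sub u v = w.
Proof. intros ->. apply addK. Qed.

Lemma sub_trans {A} {X : NormedModule A} (x y z : X) : sub x z = nm_add (sub x y) (sub y z).
Proof. unfold sub at 3. rewrite nm_addA, subK. reflexivity. Qed.

Lemma oppK {A} {X : NormedModule A} (x : X) : nm_opp (nm_opp x) = x.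
Proof. symmetry. apply opp_uniq. apply addNl. Qed.

Lemma sub_swap {A} {X : NormedModule A} (x y : X) : sub y x = nm_opp (sub x y).
Proof. apply opp_uniq. rewrite <- sub_trans. unfold sub. apply nm_addN. Qed.

Lemma scal0l {A} {X : NormedModule A} (x : X) : nm_scal C0 x = nm_zero X.
Proof. apply zero_uniq. rewrite <- nm_scalDl, Cplus00. reflexivity. Qed.

Lemma norm0 {A} {X : NormedModule A} : nm_norm (nm_zero X) = 0.
Proof. rewrite <- (scal0l (nm_zero X)), nm_norm_scal. unfold C0. rewrite Cmod_real, Rabs_R0. ring. Qed.

Lemma scal0r {A} {X : NormedModule A} l : nm_scal l (nm_zero X) = nm_zero X.
Proof. apply zero_uniq. rewrite <- nm_scalDr, nm_add0. reflexivity. Qed.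

Lemma scal_oppl {A} {X : NormedModule A} l (x : X) : nm_scal (Copp l) x = nm_opp (nm_scal l x).
Proof.
  apply opp_uniq. rewrite <- nm_scalDl.
  replace (Cplus l (Copp l)) with C0 by (apply Ceq; simpl; ring). apply scal0l.
Qed.

Lemma norm_opp {A} {X : NormedModule A} (x : X) : nm_norm (nm_opp x) = nm_norm x.
Proof.
  rewrite <- (nm_scal1 _ _ x) at 1. rewrite <- scal_oppl, nm_norm_scal.
  replace (Copp C1) with (mkC (-1) 0) by (apply Ceq; simpl; ring).
  rewrite Cmod_real, Rabs_left by lra. ring.
Qed.

Lemma dist_sym {A} {X : NormedModule A} (x y : X) : nm_dist x y = nm_dist y x.
Proof. unfold nm_dist. fold (sub x y). fold (sub y x). rewrite (sub_swap x y), norm_opp. reflexivity. Qed.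

Lemma dist_tri {A} {X : NormedModule A} (x y z : X) : nm_dist x z <= nm_dist x y + nm_dist y z.
Proof. unfold nm_dist. fold (sub x z) (sub x y) (sub y z). rewrite (sub_trans x y z). apply nm_norm_triangle. Qed.

Lemma norm_le_dist {A} {X : NormedModule A} (u v : X) : nm_norm u <= nm_norm v + nm_dist u v.
Proof.
  rewrite <- (subK u v) at 1. rewrite Rplus_comm. unfold nm_dist. fold (sub u v). apply nm_norm_triangle.
Qed.

Lemma dist_self {A} {X : NormedModule A} (x : X) : nm_dist x x = 0.
Proof. unfold nm_dist. rewrite nm_addN. apply norm0. Qed.

Lemma opp_add {A} {X : NormedModule A} (x y : X) : nm_opp (nm_add x y) = nm_add (nm_opp x) (nm_opp y).
Proof.
  symmetry. apply opp_uniq.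
  rewrite <- nm_addA, (nm_addA _ _ y), (nm_addC _ _ y (nm_opp x)), <- nm_addA, nm_addN, nm_add0, nm_addN.
  reflexivity.
Qed.

Lemma sub_add2 {A} {X : NormedModule A} (a b c d : X) :
  sub (nm_add a b) (nm_add c d) = nm_add (sub a c) (sub b d).
Proof.
  unfold sub. rewrite opp_add, <- !nm_addA. f_equal.
  rewrite !nm_addA. f_equal. apply nm_addC.
Qed.

Lemma scal_opp {A} {X : NormedModule A} l (x : X) : nm_scal l (nm_opp x) = nm_opp (nm_scal l x).
Proof. apply opp_uniq. rewrite <- nm_scalDr, nm_addN. apply scal0r. Qed.

Lemma scal_sub {A} {X : NormedModule A} l (x y : X) : sub (nm_scal l x) (nm_scal l y) = nm_scal l (sub x y).
Proof. unfold sub. rewrite nm_scalDr, scal_opp. reflexivity. Qed.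

Lemma act0r {A} {X : NormedModule A} a : sa_mem A a -> nm_act a (nm_zero X) = nm_zero X.
Proof. intro Ha. apply zero_uniq. rewrite <- nm_act_addr by auto. rewrite nm_add0. reflexivity. Qed.

Lemma act_opp {A} {X : NormedModule A} a (x : X) : sa_mem A a -> nm_act a (nm_opp x) = nm_opp (nm_act a x).
Proof. intro Ha. apply opp_uniq. rewrite <- nm_act_addr, nm_addN by auto. apply act0r; auto. Qed.

Lemma act_sub {A} {X : NormedModule A} a (x y : X) : sa_mem A a -> nm_act a (sub x y) = sub (nm_act a x) (nm_act a y).
Proof. intro Ha. unfold sub. rewrite nm_act_addr, act_opp by auto. reflexivity. Qed.

Lemma act0l {A} {X : NormedModule A} (x : X) : nm_act seq_zero x = nm_zero X.
Proof.
  assert (H0 : sa_mem A seq_zero) by apply sa_mem_zero.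
  apply zero_uniq. rewrite <- nm_act_addl, seq_add00 by auto. reflexivity.
Qed.

Lemma sub_scal {A} {X : NormedModule A} r (x : X) :
  sub x (nm_scal (mkC r 0) x) = nm_scal (mkC (1 - r) 0) x.
Proof.
  unfold sub. rewrite <- scal_oppl. rewrite <- (nm_scal1 _ _ x) at 1. rewrite <- nm_scalDl.
  f_equal. apply Ceq; simpl; ring.
Qed.

Lemma unit_mem (A : SeqAlgebra) n : sa_mem A (unit_seq n).
Proof. apply sa_c00, unit_c00. Qed.

Lemma Pm_mem (A : SeqAlgebra) M : sa_mem A (Pm M).
Proof. apply sa_c00, Pm_c00. Qed.

Lemma coord_act {A} {X : NormedModule A} n b (x : X) : sa_mem A b ->
  coord n (nm_act b x) = nm_scal (b n) (coord n x).
Proof.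
  intro Hb. unfold coord. rewrite <- nm_act_mul by (auto; apply unit_mem).
  rewrite mul_unit, nm_act_scall by apply unit_mem. reflexivity.
Qed.

Lemma coord_add {A} {X : NormedModule A} n (x y : X) : coord n (nm_add x y) = nm_add (coord n x) (coord n y).
Proof. unfold coord. apply nm_act_addr, unit_mem. Qed.

Lemma coord_scal {A} {X : NormedModule A} n l (x : X) : coord n (nm_scal l x) = nm_scal l (coord n x).
Proof. unfold coord. apply nm_act_scalr, unit_mem. Qed.

Lemma coord_sub {A} {X : NormedModule A} n (x y : X) : coord n (sub x y) = sub (coord n x) (coord n y).
Proof. unfold coord. apply act_sub, unit_mem. Qed.

Lemma coord_norm {A} {X : NormedModule A} n (x : X) : nm_norm (coord n x) <= nm_norm x.
Proof.
  unfold coord. eapply Rle_trans. apply nm_act_contr, unit_mem.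
  rewrite sa_norm_unit. lra.
Qed.

Lemma act_norm_sub {A} {X : NormedModule A} a (x y : X) : sa_mem A a ->
  nm_norm (sub (nm_act a x) (nm_act a y)) <= sa_norm A a * nm_dist x y.
Proof. intro Ha. rewrite <- act_sub by auto. apply nm_act_contr; auto. Qed.


Lemma j_zero {A} {X Y : NormedModule A} (j : X -> Y) : is_completion X Y j -> j (nm_zero X) = nm_zero Y.
Proof.
  intros (_ & Hadd & _). apply zero_uniq. rewrite <- Hadd, nm_add0. reflexivity.
Qed.

Lemma j_opp {A} {X Y : NormedModule A} (j : X -> Y) x : is_completion X Y j -> j (nm_opp x) = nm_opp (j x).
Proof.
  intros hj. apply opp_uniq. pose proof hj as (Hc & Hadd & _).
  rewrite <- Hadd, nm_addN. apply j_zero; auto.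
Qed.

Lemma j_sub {A} {X Y : NormedModule A} (j : X -> Y) x y : is_completion X Y j -> j (sub x y) = sub (j x) (j y).
Proof. intros hj. unfold sub. rewrite <- j_opp by auto. apply hj. Qed.

Lemma j_dist {A} {X Y : NormedModule A} (j : X -> Y) x y : is_completion X Y j -> nm_dist (j x) (j y) = nm_dist x y.
Proof. intros hj. unfold nm_dist. fold (sub x y) (sub (j x) (j y)). rewrite <- j_sub by auto. apply hj. Qed.

Lemma span_j {A} {X Y : NormedModule A} (j : X -> Y) s : is_completion X Y j -> in_act_span X s -> in_act_span Y (j s).
Proof.
  intros hj Hs. pose proof hj as (Hc & Hadd & Hscal & Hn & Hact & Hd).
  induction Hs.
  - rewrite j_zero by auto. constructor.
  - rewrite Hact by auto. constructor; auto.
  - rewrite Hadd. constructor; auto.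
  - rewrite Hscal. constructor; auto.
Qed.

Lemma essential_Y {A} {X Y : NormedModule A} (j : X -> Y) : is_completion X Y j -> essential X -> essential Y.
Proof.
  intros hj hE y eps Heps. pose proof hj as (Hc & Hadd & Hscal & Hn & Hact & Hd).
  destruct (Hd y (eps/2)) as [x Hx]; [lra|].
  destruct (hE x (eps/2)) as [s [Hs Hxs]]; [lra|].
  exists (j s). split. apply span_j; auto.
  eapply Rle_lt_trans. apply (dist_tri _ (j x)). rewrite j_dist by auto. lra.
Qed.

Definition finsupp {A} {X : NormedModule A} (f : X) (N : nat) : Prop :=
  forall M, (N <= M)%nat -> nm_act (Pm M) f = f.

Lemma small_prod r n eps : 0 <= r -> 0 <= n -> 0 < eps -> r < eps / (n + 1) -> r * n < eps.
Proof.
  intros Hr Hn He H.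
  assert (r * (n + 1) < eps). { apply (Rmult_lt_compat_r (n+1)) in H; [|lra].
    unfold Rdiv in H. rewrite Rmult_assoc, Rinv_l in H by lra. lra. }
  nra.
Qed.

Lemma span_fin {A} {X : NormedModule A} (s : X) : in_act_span X s ->
  forall eps, 0 < eps -> exists f N, finsupp f N /\ nm_dist s f < eps.
Proof.
  induction 1; intros eps Heps.
  - exists (nm_zero X), O. split.
    + intros M _. apply act0r, Pm_mem.
    + rewrite dist_self. lra.
  - assert (He : 0 < eps / (nm_norm x + 1)).
    { apply Rdiv_lt_0_compat; auto. pose proof (nm_norm_nonneg _ _ x). lra. }
    destruct (sa_c00_dense A a H _ He) as [b [[N Hb] Hab]].
    assert (Hbm : sa_mem A b) by (apply sa_c00; exists N; auto).
    exists (nm_act b x), N. split.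
    + intros M HM. rewrite <- nm_act_mul by (auto; apply Pm_mem).
      rewrite (Pm_mul_c00 M b N); auto.
    + unfold nm_dist. fold (sub (nm_act a x) (nm_act b x)).
      assert (E : sub (nm_act a x) (nm_act b x) = nm_act (seq_sub a b) x).
      { apply sub_eq. rewrite <- nm_act_addl by (auto; apply sa_sub; auto).
        rewrite seq_sub_add. reflexivity. }
      rewrite E. eapply Rle_lt_trans. apply nm_act_contr. apply sa_sub; auto.
      apply small_prod; auto. apply sa_norm_nonneg, sa_sub; auto. apply nm_norm_nonneg.
  - destruct (IHin_act_span1 (eps/2)) as [f1 [N1 [H1 D1]]]; [lra|].
    destruct (IHin_act_span2 (eps/2)) as [f2 [N2 [H2 D2]]]; [lra|].
    exists (nm_add f1 f2), (Nat.max N1 N2). split.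
    + intros M HM. rewrite nm_act_addr by apply Pm_mem. rewrite H1, H2 by lia. reflexivity.
    + unfold nm_dist in *. fold (sub (nm_add y z) (nm_add f1 f2)) (sub y f1) (sub z f2) in *.
      rewrite sub_add2. eapply Rle_lt_trans. apply nm_norm_triangle. lra.
  - assert (He : 0 < eps / (Cmod l + 1)).
    { apply Rdiv_lt_0_compat; auto. pose proof (Cmod_nonneg l). lra. }
    destruct (IHin_act_span _ He) as [f [N [Hf Df]]].
    exists (nm_scal l f), N. split.
    + intros M HM. rewrite nm_act_scalr by apply Pm_mem. rewrite Hf; auto.
    + unfold nm_dist in *. fold (sub (nm_scal l y) (nm_scal l f)) (sub y f) in *.
      rewrite scal_sub, nm_norm_scal. rewrite Rmult_comm.
      apply small_prod; auto. apply nm_norm_nonneg. apply Cmod_nonneg.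
Qed.

Lemma fin_approx {A} {X : NormedModule A} : essential X ->
  forall (x : X) eps, 0 < eps -> exists f N, finsupp f N /\ nm_dist x f < eps.
Proof.
  intros hE x eps Heps. destruct (hE x (eps/2)) as [s [Hs D]]; [lra|].
  destruct (span_fin s Hs (eps/2)) as [f [N [Hf Df]]]; [lra|].
  exists f, N. split; auto. eapply Rle_lt_trans. apply (dist_tri _ s). lra.
Qed.

Lemma Pm_val M n : Pm M n = C1 \/ Pm M n = C0.
Proof. unfold Pm. destruct (Nat.ltb n M); auto. Qed.

Lemma PX_contr {A} {X : NormedModule A} M (x : X) : homogeneous X ->
  nm_norm (nm_act (Pm M) x) <= nm_norm x.
Proof.
  intros hH. apply hH. intro n. rewrite coord_act by apply Pm_mem.
  destruct (Pm_val M n) as [-> | ->].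
  - rewrite nm_scal1. lra.
  - rewrite scal0l, norm0. apply nm_norm_nonneg.
Qed.

Lemma PY_contr {A} {X Y : NormedModule A} (j : X -> Y) M (z : Y) :
  is_completion X Y j -> homogeneous X -> nm_norm (nm_act (Pm M) z) <= nm_norm z.
Proof.
  intros hj hH. pose proof hj as (Hc & Hadd & Hscal & Hn & Hact & Hd).
  apply Rle_plus_epsilon. intros eps Heps.
  set (K := sa_norm A (Pm M)).
  assert (HK : 0 <= K) by apply sa_norm_nonneg, Pm_mem.
  assert (Hh : 0 < eps / (K + 2)) by (apply Rdiv_lt_0_compat; lra).
  destruct (Hd z _ Hh) as [x Hx].
  pose proof (norm_le_dist (nm_act (Pm M) z) (nm_act (Pm M) (j x))) as T1.
  pose proof (act_norm_sub (Pm M) z (j x) (Pm_mem A M)) as T2.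
  unfold nm_dist in T1 at 1. fold (sub (nm_act (Pm M) z) (nm_act (Pm M) (j x))) in T1.
  rewrite <- (Hact _ x) in T1 at 1 by apply Pm_mem. rewrite Hn in T1. fold K in T2.
  pose proof (PX_contr M x hH) as T3.
  pose proof (norm_le_dist (j x) z) as T4. rewrite Hn, dist_sym in T4.
  assert (K * nm_dist z (j x) <= K * (eps / (K+2))) by (apply Rmult_le_compat_l; lra).
  assert (eps / (K + 2) * (K + 1) < eps).
  { assert (E : eps / (K + 2) * (K + 2) = eps) by (field; lra). nra. }
  nra.
Qed.

Fixpoint Ssum {A} {X : NormedModule A} (c : nat -> R) (x : X) (k : nat) : X :=
  match k with
  | O => nm_zero X
  | S k => nm_add (Ssum c x k) (nm_scal (mkC (c k) 0) (coord k x))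
  end.

Lemma coord_Ssum {A} {X : NormedModule A} c (x : X) n k :
  coord n (Ssum c x k) = if Nat.ltb n k then nm_scal (mkC (c n) 0) (coord n x) else nm_zero X.
Proof.
  induction k; simpl.
  - unfold coord. apply act0r, unit_mem.
  - rewrite coord_add, IHk, coord_scal. change (coord k x) with (nm_act (unit_seq k) x).
    rewrite (coord_act n (unit_seq k) x (unit_mem A k)). unfold unit_seq.
    destruct (Nat.ltb_spec n k), (Nat.ltb_spec n (S k)), (Nat.eqb_spec n k); try lia.
    + rewrite scal0l, scal0r, nm_add0. reflexivity.
    + subst. rewrite nm_scal1, add0l. reflexivity.
    + rewrite scal0l, scal0r, nm_add0. reflexivity.
Qed.

Lemma Ssum_err {A} {X : NormedModule A} c (x : X) d k :
  (forall n, nm_norm (sub (coord n x) (nm_scal (mkC (c n) 0) (coord n x))) <= d) ->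
  nm_norm (sub (nm_act (Pm k) x) (Ssum c x k)) <= INR k * d.
Proof.
  intro Hd. induction k; cbn [Ssum].
  - unfold Pm. replace (fun m : nat => if Nat.ltb m 0 then C1 else C0) with seq_zero.
    + rewrite act0l. unfold sub. rewrite nm_addN, norm0. simpl. lra.
    + extensionality m. destruct (Nat.ltb_spec m 0); [lia|reflexivity].
  - rewrite Pm_S, nm_act_addl by (apply Pm_mem || apply unit_mem).
    rewrite sub_add2. eapply Rle_trans. apply nm_norm_triangle.
    fold (coord k x). specialize (Hd k). rewrite S_INR. lra.
Qed.

Lemma coord_close {A} {X Y : NormedModule A} (j : X -> Y) n (x : X) (y : Y) :
  is_completion X Y j ->
  nm_norm (coord n x) <= nm_norm (coord n y) + nm_dist y (j x) /\
  nm_norm (coord n y) <= nm_norm (coord n x) + nm_dist y (j x).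
Proof.
  intros hj. pose proof hj as (Hc & Hadd & Hscal & Hn & Hact & Hd).
  assert (E : nm_norm (coord n x) = nm_norm (coord n (j x))).
  { unfold coord. rewrite <- Hact by apply unit_mem. rewrite Hn. reflexivity. }
  assert (D : nm_dist (coord n y) (coord n (j x)) <= nm_dist y (j x)).
  { unfold nm_dist. fold (sub (coord n y) (coord n (j x))) (sub y (j x)).
    rewrite <- coord_sub. apply coord_norm. }
  pose proof (norm_le_dist (coord n (j x)) (coord n y)).
  pose proof (norm_le_dist (coord n y) (coord n (j x))).
  rewrite dist_sym in H. split; lra.
Qed.

Lemma finite_step {A} {X Y : NormedModule A} (j : X -> Y) (y1 y2 : Y) M eps :
  is_completion X Y j -> homogeneous X ->
  (forall n, nm_norm (coord n y1) <= nm_norm (coord n y2)) -> 0 < eps ->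
  nm_norm (nm_act (Pm M) y1) <= nm_norm y2 + eps.
Proof.
  intros hj hH Hy Heps. pose proof hj as (Hc & Hadd & Hscal & Hn & Hact & Hd).
  assert (HM : 0 <= INR M) by apply pos_INR.
  set (dl := eps / (2 * INR M + 3)).
  assert (Hdl : 0 < dl) by (apply Rdiv_lt_0_compat; lra).
  assert (Edl : dl * (2 * INR M + 3) = eps) by (unfold dl; field; lra).
  destruct (Hd y1 dl Hdl) as [x1 H1].
  destruct (Hd y2 dl Hdl) as [x2 H2].
  set (a := fun n => nm_norm (coord n x1)).
  set (b := fun n => nm_norm (coord n x2)).
  assert (Hab : forall n, a n <= b n + 2 * dl).
  { intro n. destruct (coord_close j n x1 y1 hj) as [T1 _].
    destruct (coord_close j n x2 y2 hj) as [_ T2]. specialize (Hy n). unfold a, b. lra. }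
  set (cr := fun n => if Rle_dec (a n) (b n) then 1 else b n / a n).
  assert (Hc1 : forall n, Rabs (cr n) * a n <= b n /\ Rabs (1 - cr n) * a n <= 2 * dl).
  { intro n. specialize (Hab n). unfold cr.
    assert (0 <= b n) by apply nm_norm_nonneg.
    destruct (Rle_dec (a n) (b n)).
    - rewrite Rabs_R1. replace (1 - 1) with 0 by ring. rewrite Rabs_R0. lra.
    - assert (0 < a n) by lra.
      assert (0 <= b n / a n <= 1).
      { assert (Eq : b n / a n * a n = b n) by (field; lra).
        set (q := b n / a n) in *. split; nra. }
      rewrite !Rabs_pos_eq by lra.
      replace (b n / a n * a n) with (b n) by (field; lra).
      replace ((1 - b n / a n) * a n) with (a n - b n) by (field; lra). lra. }
  set (S := Ssum cr x1 M).
  assert (HS : nm_norm S <= nm_norm x2).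
  { apply hH. intro n. unfold S. rewrite coord_Ssum. destruct (Nat.ltb n M).
    - rewrite nm_norm_scal, Cmod_real. apply (Hc1 n).
    - rewrite norm0. apply nm_norm_nonneg. }
  assert (HE : nm_norm (sub (nm_act (Pm M) x1) S) <= INR M * (2 * dl)).
  { apply Ssum_err. intro n. rewrite sub_scal, nm_norm_scal, Cmod_real. apply (Hc1 n). }
  pose proof (norm_le_dist (nm_act (Pm M) y1) (j S)) as T1.
  rewrite Hn in T1.
  pose proof (dist_tri (nm_act (Pm M) y1) (nm_act (Pm M) (j x1)) (j S)) as T2.
  assert (T3 : nm_dist (nm_act (Pm M) y1) (nm_act (Pm M) (j x1)) <= nm_dist y1 (j x1)).
  { unfold nm_dist. fold (sub (nm_act (Pm M) y1) (nm_act (Pm M) (j x1))) (sub y1 (j x1)).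
    rewrite <- act_sub by apply Pm_mem. apply (PY_contr j); auto. }
  assert (T4 : nm_dist (nm_act (Pm M) (j x1)) (j S) = nm_norm (sub (nm_act (Pm M) x1) S)).
  { rewrite <- Hact by apply Pm_mem. rewrite j_dist by auto. reflexivity. }
  pose proof (norm_le_dist (j x2) y2) as T5. rewrite Hn, dist_sym in T5.
  nra.
Qed.

Lemma homogeneous_Y {A} {X Y : NormedModule A} (j : X -> Y) :
  is_completion X Y j -> essential X -> homogeneous X -> homogeneous Y.
Proof.
  intros hj hE hH y1 y2 Hy. pose proof hj as (Hc & Hadd & Hscal & Hn & Hact & Hd).
  apply Rle_plus_epsilon. intros eps Heps.
  destruct (Hd y1 (eps/6)) as [x0 H0]; [lra|].
  destruct (fin_approx hE x0 (eps/6)) as [f [N [Hf Df]]]; [lra|].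
  assert (D : nm_dist y1 (j f) < eps/3).
  { eapply Rle_lt_trans. apply (dist_tri _ (j x0)). rewrite j_dist by auto. lra. }
  assert (T1 : nm_dist y1 (nm_act (Pm N) y1) <= 2 * nm_dist y1 (j f)).
  { eapply Rle_trans. apply (dist_tri _ (j f)).
    assert (E : j f = nm_act (Pm N) (j f)) by (rewrite <- Hact by apply Pm_mem; rewrite Hf; auto).
    rewrite E at 2.
    unfold nm_dist at 2. fold (sub (nm_act (Pm N) (j f)) (nm_act (Pm N) y1)).
    rewrite <- act_sub by apply Pm_mem.
    pose proof (PY_contr j N (sub (j f) y1) hj hH).
    assert (nm_norm (sub (j f) y1) = nm_dist y1 (j f)) by (change (nm_norm (sub (j f) y1)) with (nm_dist (j f) y1); apply dist_sym).
    lra. }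
  pose proof (norm_le_dist y1 (nm_act (Pm N) y1)) as T2.
  pose proof (finite_step j y1 y2 N (eps/3) hj hH Hy) as T3.
  lra.
Qed.

Theorem proposition1p6 (A : SeqAlgebra) (X Y : NormedModule A) (j : X -> Y)
  (hj : is_completion X Y j) :
  essential X -> homogeneous X -> essential Y /\ homogeneous Y.
Proof.
  intros hE hH. split.
  - apply (essential_Y j); auto.
  - apply (homogeneous_Y j); auto.
Qed.
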